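(* Let $D$ be a (smooth, generic) diagram of a knot in $\mathbb{R}^2$. For every double point of $D$ there exists an intersection parallelogram.
   Context: An intersection parallelogram for a knot diagram $D$ is a parallelogram $P$ with two horizontal sides such that: $P$ contains exactly one double point of $D$ and exactly two arcs of $D$ in its interior; one arc (the vertical arc) meets each of the two horizontal sides exactly once; the other arc (the horizontal arc) meets each of the other two parallel sides exactly once; and the arcs do not pass through the corners of $P$. *)

(* Defs.v *)
From Stdlib Require Import Reals Lra List.
From Coquelicot Require Import Coquelicot.
Open Scope R_scope.

Definition pt := (R * R)%type.

Definition curve_pt (gx gy : R -> R) (t : R) : pt := (gx t, gy t).

Definition smooth (f : R -> R) : Prop := forall (n : nat) (x : R), ex_derive_n f n x.

(** p is a double point of the closed curve (period 1): it has two distinct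
    parameters in one period [0,1). *)
Definition is_double_point (gx gy : R -> R) (p : pt) : Prop :=
  exists s t, 0 <= s /\ s < t /\ t < 1 /\ curve_pt gx gy s = p /\ curve_pt gx gy t = p.

(** A smooth generic knot diagram: a smooth, 1-periodic, regular closed plane
    curve, whose only singularities are finitely many transverse double points
    (no triple points, no tangencies). *)
Definition generic_knot_diagram (gx gy : R -> R) : Prop :=
  (forall t, gx (t + 1) = gx t /\ gy (t + 1) = gy t) /\
  smooth gx /\ smooth gy /\
  (forall t, (Derive gx t, Derive gy t) <> (0, 0)) /\
  (forall r s t, 0 <= r -> r < s -> s < t -> t < 1 ->
     ~ (curve_pt gx gy r = curve_pt gx gy s /\ curve_pt gx gy s = curve_pt gx gy t)) /\
  (forall s t, 0 <= s -> s < t -> t < 1 -> curve_pt gx gy s = curve_pt gx gy t ->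
     Derive gx s * Derive gy t - Derive gy s * Derive gx t <> 0) /\
  (exists l : list pt, forall p, is_double_point gx gy p -> In p l).

(** The parallelogram with two horizontal sides
      P = { (x,y) | y0 <= y <= y1, a0 <= x - c*y <= a1 }   (y0 < y1, a0 < a1). *)
Definition in_par (y0 y1 a0 a1 c : R) (p : pt) : Prop :=
  y0 <= snd p <= y1 /\ a0 <= fst p - c * snd p <= a1.
Definition in_par_interior (y0 y1 a0 a1 c : R) (p : pt) : Prop :=
  y0 < snd p < y1 /\ a0 < fst p - c * snd p < a1.
Definition on_bottom (y0 y1 a0 a1 c : R) (p : pt) : Prop :=
  snd p = y0 /\ a0 <= fst p - c * snd p <= a1.
Definition on_top (y0 y1 a0 a1 c : R) (p : pt) : Prop :=
  snd p = y1 /\ a0 <= fst p - c * snd p <= a1.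
Definition on_left (y0 y1 a0 a1 c : R) (p : pt) : Prop :=
  y0 <= snd p <= y1 /\ fst p - c * snd p = a0.
Definition on_right (y0 y1 a0 a1 c : R) (p : pt) : Prop :=
  y0 <= snd p <= y1 /\ fst p - c * snd p = a1.
Definition is_corner (y0 y1 a0 a1 c : R) (p : pt) : Prop :=
  (snd p = y0 \/ snd p = y1) /\ (fst p - c * snd p = a0 \/ fst p - c * snd p = a1).

(** P (given by y0 y1 a0 a1 c) is an intersection parallelogram for the
    diagram, and the unique double point of the diagram in P is p.
    The intersection of the diagram with P consists of exactly two arcs,
    the images of the parameter intervals [s0,s1] (vertical arc) and
    [t0,t1] (horizontal arc), taken modulo the period 1; each arc lies in
    the interior of P apart from its endpoints. *)
Definition intersection_parallelogram (gx gy : R -> R) (p : pt)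
    (y0 y1 a0 a1 c : R) : Prop :=
  y0 < y1 /\ a0 < a1 /\
  is_double_point gx gy p /\ in_par y0 y1 a0 a1 c p /\
  (forall q, is_double_point gx gy q -> in_par y0 y1 a0 a1 c q -> q = p) /\
  exists s0 s1 t0 t1 : R,
    s0 <= s1 /\ s1 < t0 /\ t0 <= t1 /\ t1 < s0 + 1 /\
    (forall t, in_par y0 y1 a0 a1 c (curve_pt gx gy t) <->
       exists k : Z, (s0 <= t + IZR k <= s1) \/ (t0 <= t + IZR k <= t1)) /\
    (forall s, s0 < s < s1 -> in_par_interior y0 y1 a0 a1 c (curve_pt gx gy s)) /\
    (forall t, t0 < t < t1 -> in_par_interior y0 y1 a0 a1 c (curve_pt gx gy t)) /\
    (exists! s, s0 <= s <= s1 /\ on_bottom y0 y1 a0 a1 c (curve_pt gx gy s)) /\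
    (exists! s, s0 <= s <= s1 /\ on_top y0 y1 a0 a1 c (curve_pt gx gy s)) /\
    (exists! t, t0 <= t <= t1 /\ on_left y0 y1 a0 a1 c (curve_pt gx gy t)) /\
    (exists! t, t0 <= t <= t1 /\ on_right y0 y1 a0 a1 c (curve_pt gx gy t)) /\
    (forall t, ~ is_corner y0 y1 a0 a1 c (curve_pt gx gy t)).

(* Main.v *)
Require Import Defs.
From Stdlib Require Import Reals Lra Lia ZArith.
From Coquelicot Require Import Coquelicot.
Open Scope R_scope.

Lemma cont_eps (f : R -> R) x : continuity_pt f x ->
  forall e, 0 < e -> exists d, 0 < d /\ forall y, Rabs (y - x) < d -> Rabs (f y - f x) < e.
Proof.
  intros H e He. destruct (H e He) as [d [Hd H']]. exists d; split; auto.
  intros y Hy. destruct (Req_dec y x) as [->|Hne].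
  - rewrite Rminus_diag, Rabs_R0; lra.
  - apply (H' y). split; [split; [exact I| auto]|]. simpl. unfold R_dist. exact Hy.
Qed.

Lemma deriv_cont (f : R -> R) x : ex_derive f x -> continuity_pt f x.
Proof. intro H. apply continuity_pt_filterlim. exact (@ex_derive_continuous R_AbsRing R_NormedModule f x H). Qed.

Lemma mono (f df : R -> R) x y : x <= y ->
  (forall t, x <= t <= y -> is_derive f t (df t)) ->
  (forall t, x <= t <= y -> 0 <= df t) -> f x <= f y.
Proof.
  intros Hxy Hd Hp.
  destruct (MVT_gen f x y df) as [c [Hc Heq]].
  - intros t Ht. apply Hd. rewrite Rmin_left, Rmax_right in Ht by lra. lra.
  - intros t Ht. rewrite Rmin_left, Rmax_right in Ht by lra.
    apply deriv_cont. eexists. apply Hd. lra.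
  - rewrite Rmin_left, Rmax_right in Hc by lra.
    assert (0 <= df c * (y - x)) by (apply Rmult_le_pos; [apply Hp; lra | lra]). lra.
Qed.

Lemma Rabs_le_inv a b : Rabs a <= b -> -b <= a <= b.
Proof. unfold Rabs; destruct (Rcase_abs a); intros; lra. Qed.
Lemma Rabs_lt_inv a b : Rabs a < b -> -b < a < b.
Proof. unfold Rabs; destruct (Rcase_abs a); intros; lra. Qed.

Lemma mono2 (f g df dg : R -> R) x y : x <= y ->
  (forall t, x <= t <= y -> is_derive f t (df t) /\ is_derive g t (dg t) /\ df t <= dg t) ->
  f y - f x <= g y - g x.
Proof.
  intros Hxy H.
  assert (Hm : (fun t => g t - f t) x <= (fun t => g t - f t) y).
  { apply (mono (fun t => g t - f t) (fun t => dg t - df t) x y); auto.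
    - intros t Ht. destruct (H t Ht) as [H1 [H2 _]]. exact (@is_derive_minus R_AbsRing R_NormedModule g f t (dg t) (df t) H2 H1).
    - intros t Ht. destruct (H t Ht) as [_ [_ H3]]. lra. }
  simpl in Hm. lra.
Qed.

Lemma is_derive_lin k t : is_derive (fun x => k * x) t k.
Proof. auto_derive; auto; ring. Qed.

Lemma mono_lin (f df : R -> R) k x y : x <= y ->
  (forall t, x <= t <= y -> is_derive f t (df t) /\ k <= df t) ->
  k * (y - x) <= f y - f x.
Proof.
  intros Hxy H.
  assert (Hm := mono2 (fun t => k * t) f (fun _ => k) df x y Hxy).
  simpl in Hm. enough (k*y - k*x <= f y - f x) by lra. apply Hm.
  intros t Ht. destruct (H t Ht). split; [apply is_derive_lin | split; auto].
Qed.

Lemma IZR_not01 (k : Z) : 0 < IZR k < 1 -> False.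
Proof.
  intros [H1 H2]. apply lt_IZR in H1. apply lt_IZR in H2. lia.
Qed.

Lemma per_nat (f : R -> R) : (forall t, f (t + 1) = f t) ->
  forall n t, f (t + INR n) = f t /\ f (t - INR n) = f t.
Proof.
  intros Hf n. induction n as [|n IH]; intro t.
  - simpl. rewrite Rplus_0_r, Rminus_0_r. auto.
  - rewrite S_INR. split.
    + replace (t + (INR n + 1)) with ((t + INR n) + 1) by ring. rewrite Hf. apply IH.
    + rewrite <- (proj2 (IH t)). rewrite <- Hf.
      f_equal. ring.
Qed.

Lemma per_Z (f : R -> R) : (forall t, f (t + 1) = f t) ->
  forall (k : Z) t, f (t + IZR k) = f t.
Proof.
  intros Hf k t. destruct (Z_le_dec 0 k) as [Hk|Hk].
  - destruct (IZN k Hk) as [n ->]. rewrite <- INR_IZR_INZ. apply per_nat; auto.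
  - assert (0 <= - k)%Z by lia. destruct (IZN (-k) H) as [n Hn].
    replace k with (- Z.of_nat n)%Z by lia. rewrite opp_IZR, <- INR_IZR_INZ.
    apply per_nat; auto.
Qed.

Lemma deriv_per (f : R -> R) t : (forall t, f (t + 1) = f t) -> ex_derive f (t + 1) ->
  Derive f (t + 1) = Derive f t.
Proof.
  intros Hf Hd. symmetry. apply is_derive_unique.
  assert (H := @is_derive_comp R_AbsRing R_NormedModule f (fun x => x + 1) t (Derive f (t+1)) 1
                 (Derive_correct _ _ Hd)).
  assert (H1 : is_derive (fun x : R => x + 1) t 1) by (auto_derive; auto; ring).
  specialize (H H1). change (scal 1 (Derive f (t+1))) with (1 * Derive f (t+1)) in H; rewrite Rmult_1_l in H.
  eapply is_derive_ext; [| exact H]. intro x. simpl. apply Hf.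
  Unshelve. all: idtac.
Qed.

Lemma arc (H dH : R -> R) al d m h :
  0 < d -> 0 < m -> 0 < h -> h <= m * d ->
  (forall t, continuity_pt H t) ->
  (forall t, al - d <= t <= al + d -> is_derive H t (dH t) /\ m <= dH t) ->
  exists s0 s1, al - d <= s0 < al /\ al < s1 <= al + d /\
    H s0 = H al - h /\ H s1 = H al + h /\
    (forall x y, al - d <= x <= al + d -> al - d <= y <= al + d -> x <= y ->
        m * (y - x) <= H y - H x) /\
    (forall t, al - d <= t <= al + d -> (s0 <= t <= s1 <-> Rabs (H t - H al) <= h)) /\
    (forall t, s0 < t < s1 -> Rabs (H t - H al) < h).
Proof.
  intros Hd Hm Hh Hhd Hc Hder.
  assert (Inc : forall x y, al - d <= x <= al + d -> al - d <= y <= al + d -> x <= y ->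
        m * (y - x) <= H y - H x).
  { intros x y Hx Hy Hxy. apply (mono_lin H dH); auto. intros t Ht. apply Hder. lra. }
  assert (E1 : m * (al - (al - d)) <= H al - H (al - d)) by (apply Inc; lra).
  assert (E2 : m * ((al + d) - al) <= H (al + d) - H al) by (apply Inc; lra).
  destruct (IVT_gen H (al - d) al (H al - h) Hc) as [s0 [Hs0 Hs0e]].
  { rewrite Rmin_left, Rmax_right by nra. nra. }
  destruct (IVT_gen H al (al + d) (H al + h) Hc) as [s1 [Hs1 Hs1e]].
  { rewrite Rmin_left, Rmax_right by nra. nra. }
  rewrite Rmin_left, Rmax_right in Hs0 by lra.
  rewrite Rmin_left, Rmax_right in Hs1 by lra.
  assert (s0 <> al) by (intro; subst; lra).
  assert (s1 <> al) by (intro; subst; lra).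
  assert (s0 < al) by lra. assert (al < s1) by lra.
  exists s0, s1. split; [lra|]. split; [lra|]. split; [auto|]. split; [auto|].
  split; [exact Inc|]. split.
  - intros t Ht. split.
    + intros Hst. assert (A1 : m * (t - s0) <= H t - H s0) by (apply Inc; lra).
      assert (A2 : m * (s1 - t) <= H s1 - H t) by (apply Inc; lra).
      apply Rabs_le. nra.
    + intros Ha. apply Rabs_le_inv in Ha.
      destruct (Rle_dec s0 t); destruct (Rle_dec t s1); try (split; lra).
      * assert (A2 : m * (t - s1) <= H t - H s1) by (apply Inc; lra). nra.
      * assert (A1 : m * (s0 - t) <= H s0 - H t) by (apply Inc; lra). nra.
  - intros t Ht. assert (A1 : m * (t - s0) <= H t - H s0) by (apply Inc; lra).
    assert (A2 : m * (s1 - t) <= H s1 - H t) by (apply Inc; lra).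
    apply Rabs_def1; nra.
Qed.

Lemma cauchy (f g df dg : R -> R) x y K : x <= y ->
  (forall t, x <= t <= y -> is_derive f t (df t) /\ is_derive g t (dg t) /\ Rabs (df t) <= K * dg t) ->
  Rabs (f y - f x) <= K * (g y - g x).
Proof.
  intros Hxy H.
  assert (H1 : f y - f x <= (fun t => K * g t) y - (fun t => K * g t) x).
  { apply (mono2 f (fun t => K * g t) df (fun t => K * dg t)); auto.
    intros t Ht. destruct (H t Ht) as [A [B C]]. split; [auto|split].
    - exact (is_derive_scal g t K (dg t) B).
    - apply Rabs_le_inv in C. lra. }
  assert (H2 : (fun t => - f t) y - (fun t => - f t) x <= (fun t => K * g t) y - (fun t => K * g t) x).
  { apply (mono2 (fun t => - f t) (fun t => K * g t) (fun t => - df t) (fun t => K * dg t)); auto.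
    intros t Ht. destruct (H t Ht) as [A [B C]]. split; [|split].
    - exact (@is_derive_opp R_AbsRing R_NormedModule (fun t => f t) t (df t) A).
    - exact (is_derive_scal g t K (dg t) B).
    - apply Rabs_le_inv in C. lra. }
  simpl in *. apply Rabs_le. lra.
Qed.

Lemma cauchy_c (f g df dg : R -> R) a d K : 0 <= K ->
  (forall t, a - d <= t <= a + d -> is_derive f t (df t) /\ is_derive g t (dg t) /\ Rabs (df t) <= K * dg t) ->
  forall t, a - d <= t <= a + d -> Rabs (f t - f a) <= K * Rabs (g t - g a).
Proof.
  intros HK H t Ht. destruct (Rle_dec a t).
  - assert (C := cauchy f g df dg a t K r (fun u Hu => H u ltac:(lra))).
    eapply Rle_trans; [exact C|]. apply Rmult_le_compat_l; auto. apply Rle_abs.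
  - assert (C := cauchy f g df dg t a K ltac:(lra) (fun u Hu => H u ltac:(lra))).
    rewrite Rabs_minus_sym. eapply Rle_trans; [exact C|]. apply Rmult_le_compat_l; auto.
    rewrite Rabs_minus_sym. apply Rle_abs.
Qed.

Lemma minpos (f : R -> R) a b : a <= b -> (forall t, continuity_pt f t) ->
  (forall t, a <= t <= b -> 0 < f t) -> exists m, 0 < m /\ forall t, a <= t <= b -> m <= f t.
Proof.
  intros Hab Hc Hp. destruct (continuity_ab_min f a b Hab (fun c _ => Hc c)) as [x [Hx Hxab]].
  exists (f x). split; auto.
Qed.

Lemma pos3 a b c : 0 < a -> 0 < b -> 0 < c -> exists d, 0 < d /\ d <= a /\ d <= b /\ d <= c.
Proof.
  intros. exists (Rmin a (Rmin b c)). repeat split.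
  - repeat apply Rmin_glb_lt; auto.
  - apply Rmin_l.
  - eapply Rle_trans; [apply Rmin_r| apply Rmin_l].
  - eapply Rle_trans; [apply Rmin_r| apply Rmin_r].
Qed.

Lemma in_par_abs py px h w c q : 0 < h -> 0 < w ->
  (in_par (py - h) (py + h) (px - w) (px + w) c q <->
   Rabs (snd q - py) <= h /\ Rabs (fst q - c * snd q - px) <= w).
Proof.
  intros. unfold in_par. split.
  - intros [A B]. split; apply Rabs_le; lra.
  - intros [A B]. apply Rabs_le_inv in A. apply Rabs_le_inv in B. lra.
Qed.

Lemma in_par_int_abs py px h w c q : 
  (in_par_interior (py - h) (py + h) (px - w) (px + w) c q <->
   Rabs (snd q - py) < h /\ Rabs (fst q - c * snd q - px) < w).
Proof.
  unfold in_par_interior. split.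
  - intros [A B]. split; apply Rabs_def1; lra.
  - intros [A B]. apply Rabs_lt_inv in A. apply Rabs_lt_inv in B. lra.
Qed.

Lemma sign_of (x : R) : x <> 0 -> exists s, (s = 1 \/ s = -1) /\ s * x = Rabs x.
Proof.
  intro H. unfold Rabs. destruct (Rcase_abs x).
  - exists (-1). split; [auto|ring].
  - exists 1. split; [auto|ring].
Qed.

Lemma core (gx gy : R -> R) (p : pt) (al be : R) :
  (forall t, gx (t+1) = gx t) -> (forall t, gy (t+1) = gy t) ->
  (forall t, ex_derive gx t) -> (forall t, ex_derive gy t) ->
  (forall t, continuity_pt (Derive gx) t) -> (forall t, continuity_pt (Derive gy) t) ->
  al < be < al + 1 ->
  curve_pt gx gy al = p -> curve_pt gx gy be = p ->
  (forall t, al <= t < al + 1 -> curve_pt gx gy t = p -> t = al \/ t = be) ->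
  Derive gy al <> 0 ->
  Derive gx al * Derive gy be - Derive gy al * Derive gx be <> 0 ->
  is_double_point gx gy p ->
  exists y0 y1 a0 a1 c, intersection_parallelogram gx gy p y0 y1 a0 a1 c.
Proof.
  intros Pgx Pgy Dx Dy Cx Cy Hab Pa Pb Pre Hy0 Hcr Hdp.
  set (c := Derive gx al / Derive gy al).
  set (F := fun t => gx t - c * gy t).
  set (dF := fun t => Derive gx t - c * Derive gy t).
  assert (HdF : forall t, is_derive F t (dF t)).
  { intro t. unfold F, dF.
    apply (@is_derive_minus R_AbsRing R_NormedModule gx (fun t => c * gy t)).
    - apply Derive_correct; auto.
    - apply is_derive_scal. apply Derive_correct; auto. }
  assert (HdG : forall t, is_derive gy t (Derive gy t)) by (intro; apply Derive_correct; auto).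
  assert (CF : forall t, continuity_pt F t) by (intro; apply deriv_cont; eexists; apply HdF).
  assert (CG : forall t, continuity_pt gy t) by (intro; apply deriv_cont; auto).
  assert (CdF : forall t, continuity_pt dF t).
  { intro t. unfold dF. apply continuity_pt_minus; auto. apply continuity_pt_scal; auto. }
  assert (dFa : dF al = 0) by (unfold dF, c; field; auto).
  assert (dFb : dF be <> 0).
  { unfold dF, c. intro E. apply Hcr. field_simplify in E; auto.
    apply (Rmult_eq_compat_r (Derive gy al)) in E. field_simplify in E; auto. lra. }
  set (px := F al). set (py := gy al).
  assert (Fb : F be = px /\ gy be = py).
  { unfold px, py, F. rewrite <- Pb in Pa. unfold curve_pt in Pa. injection Pa. intros -> ->. auto. }
  destruct (sign_of _ Hy0) as [sg [Hsg HsgA]].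
  destruct (sign_of _ dFb) as [tau [Htau HtauB]].
  set (A := Rabs (Derive gy al)). set (B := Rabs (dF be)).
  assert (Apos : 0 < A) by (apply Rabs_pos_lt; auto).
  assert (Bpos : 0 < B) by (apply Rabs_pos_lt; auto).
  set (L := 2 * (Rabs (Derive gy be) + 1) / B).
  assert (Lpos : 0 < L).
  { unfold L. apply Rdiv_lt_0_compat; auto. assert (0 <= Rabs (Derive gy be)) by apply Rabs_pos. lra. }
  set (eps := / (2 * (L + 1))).
  assert (epspos : 0 < eps) by (unfold eps; apply Rinv_0_lt_compat; lra).
  assert (epsL : eps * (L + 1) = / 2) by (unfold eps; field; lra).
  destruct (cont_eps _ _ (Cy al) (A/2) ltac:(lra)) as [d1 [d1p Hd1]].
  destruct (cont_eps _ _ (CdF al) (eps * A / 2) ltac:(nra)) as [d2 [d2p Hd2]].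
  destruct (cont_eps _ _ (CdF be) (B/2) ltac:(lra)) as [d3 [d3p Hd3]].
  destruct (cont_eps _ _ (Cy be) 1 ltac:(lra)) as [d4 [d4p Hd4]].
  destruct (pos3 (Rmin d1 d2) (Rmin d3 d4) (Rmin ((be - al)/3) ((al + 1 - be)/3))) as [d0 [d0p [Hd0a [Hd0b Hd0c]]]].
  { apply Rmin_glb_lt; auto. } { apply Rmin_glb_lt; auto. } { apply Rmin_glb_lt; lra. }
  set (d := d0 / 2).
  assert (dp : 0 < d) by (unfold d; lra).
  assert (dd1 : d < d1 /\ d < d2).
  { unfold d. split; [eapply Rlt_le_trans; [|apply (Rmin_l d1 d2)]|eapply Rlt_le_trans; [|apply (Rmin_r d1 d2)]]; lra. }
  assert (dd2 : d < d3 /\ d < d4).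
  { unfold d. split; [eapply Rlt_le_trans; [|apply (Rmin_l d3 d4)]|eapply Rlt_le_trans; [|apply (Rmin_r d3 d4)]]; lra. }
  assert (dd3 : d < (be - al) / 3 /\ d < (al + 1 - be) / 3).
  { unfold d. assert (H1 := Rmin_l ((be - al)/3) ((al + 1 - be)/3)).
    assert (H2 := Rmin_r ((be - al)/3) ((al + 1 - be)/3)). lra. }
  assert (NA : forall t, al - d <= t <= al + d ->
     A / 2 <= sg * Derive gy t /\ Rabs (dF t) <= eps * (sg * Derive gy t)).
  { intros t Ht. assert (E1 : Rabs (t - al) < d1) by (apply Rabs_def1; lra).
    assert (E2 : Rabs (t - al) < d2) by (apply Rabs_def1; lra).
    specialize (Hd1 t E1). specialize (Hd2 t E2). rewrite dFa, Rminus_0_r in Hd2.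
    apply Rabs_lt_inv in Hd1.
    assert (A / 2 <= sg * Derive gy t) by (destruct Hsg; subst sg; unfold A in *; lra).
    split; auto. nra. }
  assert (NB : forall t, be - d <= t <= be + d ->
     B / 2 <= tau * dF t /\ Rabs (Derive gy t) <= L * (tau * dF t)).
  { intros t Ht. assert (E1 : Rabs (t - be) < d3) by (apply Rabs_def1; lra).
    assert (E2 : Rabs (t - be) < d4) by (apply Rabs_def1; lra).
    specialize (Hd3 t E1). specialize (Hd4 t E2).
    apply Rabs_lt_inv in Hd3.
    assert (B / 2 <= tau * dF t) by (destruct Htau; subst tau; unfold B in *; lra).
    split; auto.
    assert (Rabs (Derive gy t) <= Rabs (Derive gy be) + 1).
    { assert (X := Rabs_triang_inv (Derive gy t) (Derive gy be)). lra. }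
    assert (L * (B / 2) = Rabs (Derive gy be) + 1) by (unfold L; field; lra).
    nra. }
  set (D := fun t => Rabs (F t - px) + Rabs (gy t - py)).
  assert (CD : forall t, continuity_pt D t).
  { intro t. unfold D. apply continuity_pt_plus.
    - apply (continuity_pt_comp (fun t => F t - px) Rabs). 
      + apply continuity_pt_minus; auto. apply continuity_pt_const. intros ? ?; auto.
      + apply Rcontinuity_abs.
    - apply (continuity_pt_comp (fun t => gy t - py) Rabs).
      + apply continuity_pt_minus; auto. apply continuity_pt_const. intros ? ?; auto.
      + apply Rcontinuity_abs. }
  assert (Dz : forall t, F t = px -> gy t = py -> curve_pt gx gy t = p).
  { intros t E1 E2. rewrite <- Pa. unfold curve_pt. unfold F, px, py in *. f_equal; auto.
    rewrite E2 in E1. unfold F in E1. lra. }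
  assert (Dpos : forall t, al < t < al + 1 -> t <> be -> 0 < D t).
  { intros t Ht Hb. unfold D.
    destruct (Req_dec (F t) px) as [E1|E1]; destruct (Req_dec (gy t) py) as [E2|E2].
    - exfalso. destruct (Pre t ltac:(lra) (Dz t E1 E2)); lra.
    - assert (0 < Rabs (gy t - py)) by (apply Rabs_pos_lt; lra).
      assert (0 <= Rabs (F t - px)) by apply Rabs_pos. lra.
    - assert (0 < Rabs (F t - px)) by (apply Rabs_pos_lt; lra).
      assert (0 <= Rabs (gy t - py)) by apply Rabs_pos. lra.
    - assert (0 < Rabs (F t - px)) by (apply Rabs_pos_lt; lra).
      assert (0 <= Rabs (gy t - py)) by apply Rabs_pos. lra. }
  destruct (minpos D (al + d) (be - d) ltac:(lra) CD) as [m1 [m1p Hm1]].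
  { intros t Ht. apply Dpos; lra. }
  destruct (minpos D (be + d) (al + 1 - d) ltac:(lra) CD) as [m2 [m2p Hm2]].
  { intros t Ht. apply Dpos; lra. }
  destruct (pos3 (A / 2 * d) ((L + 1) * (B / 2) * d) (Rmin m1 m2 / 2)) as [h [hp [Hh1 [Hh2 Hh3]]]].
  { apply Rmult_lt_0_compat; lra. } { apply Rmult_lt_0_compat; [apply Rmult_lt_0_compat|]; lra. } { assert (0 < Rmin m1 m2) by (apply Rmin_glb_lt; auto). lra. }
  set (w := h / (L + 1)).
  assert (wp : 0 < w) by (unfold w; apply Rdiv_lt_0_compat; lra).
  assert (whL : w * (L + 1) = h) by (unfold w; field; lra).
  assert (Sep : forall t, (al + d <= t <= be - d) \/ (be + d <= t <= al + 1 - d) ->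
      h + w < Rabs (F t - px) + Rabs (gy t - py)).
  { intros t Ht. assert (Rmin m1 m2 <= D t).
    { destruct Ht as [Ht|Ht]; [eapply Rle_trans; [apply Rmin_l|apply Hm1; auto] | eapply Rle_trans; [apply Rmin_r|apply Hm2; auto]]. }
    unfold D in *. assert (w < h) by nra. lra. }
  destruct (arc (fun t => sg * gy t) (fun t => sg * Derive gy t) al d (A / 2) h dp ltac:(lra) hp ltac:(lra))
    as [s0 [s1 [Hs0 [Hs1 [Hs0e [Hs1e [IncA [ArcA ArcA']]]]]]]].
  { intro t. apply continuity_pt_scal; auto. }
  { intros t Ht. split; [apply is_derive_scal; auto | apply NA; auto]. }
  destruct (arc (fun t => tau * F t) (fun t => tau * dF t) be d (B / 2) w dp ltac:(lra) wp ltac:(nra))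
    as [t0 [t1 [Ht0 [Ht1 [Ht0e [Ht1e [IncB [ArcB ArcB']]]]]]]].
  { intro t. apply continuity_pt_scal; auto. }
  { intros t Ht. split; [apply is_derive_scal; auto | apply NB; auto]. }
  simpl in *.
  assert (sgabs : forall x y, Rabs (sg * x - sg * y) = Rabs (x - y)).
  { intros x y. rewrite <- Rmult_minus_distr_l, Rabs_mult. destruct Hsg; subst sg;
    [rewrite Rabs_R1 | rewrite Rabs_m1]; ring. }
  assert (tauabs : forall x y, Rabs (tau * x - tau * y) = Rabs (x - y)).
  { intros x y. rewrite <- Rmult_minus_distr_l, Rabs_mult. destruct Htau; subst tau;
    [rewrite Rabs_R1 | rewrite Rabs_m1]; ring. }
  assert (KA : forall t, al - d <= t <= al + d -> Rabs (F t - px) <= eps * Rabs (gy t - py)).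
  { intros t Ht. rewrite <- (sgabs (gy t) py). 
    apply (cauchy_c F (fun t => sg * gy t) dF (fun t => sg * Derive gy t) al d eps); [lra| |auto].
    intros u Hu. split; [auto|split; [apply is_derive_scal; auto| apply NA; auto]]. }
  assert (KB : forall t, be - d <= t <= be + d -> Rabs (gy t - py) <= L * Rabs (F t - px)).
  { intros t Ht. rewrite <- (tauabs (F t) px). destruct Fb as [Fb1 Fb2]. rewrite <- Fb1, <- Fb2.
    apply (cauchy_c gy (fun t => tau * F t) (Derive gy) (fun t => tau * dF t) be d L); [lra| |auto].
    intros u Hu. split; [auto|split; [apply is_derive_scal; auto| apply NB; auto]]. }
  setoid_rewrite sgabs in ArcA. setoid_rewrite sgabs in ArcA'.
  setoid_rewrite tauabs in ArcB. setoid_rewrite tauabs in ArcB'.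
  destruct Fb as [Fb1 Fb2]. rewrite Fb1 in ArcB, ArcB'. change (gy al) with py in ArcA, ArcA'.
  assert (ehw : eps * h < w).
  { assert (E : eps * h = w / 2) by (unfold w, eps; field; lra). lra. }
  assert (Lwh : L * w < h) by lra.
  assert (Per : forall (k : Z) t, curve_pt gx gy (t + IZR k) = curve_pt gx gy t).
  { intros k t. unfold curve_pt. rewrite (per_Z gx Pgx), (per_Z gy Pgy). auto. }
  assert (IP : forall t, in_par (py - h) (py + h) (px - w) (px + w) c (curve_pt gx gy t) <->
            Rabs (gy t - py) <= h /\ Rabs (F t - px) <= w).
  { intro t. rewrite in_par_abs by auto. simpl. unfold F. tauto. }
  assert (InA : forall t, al - d <= t <= al + d ->
     (in_par (py - h) (py + h) (px - w) (px + w) c (curve_pt gx gy t) <-> s0 <= t <= s1)).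
  { intros t Ht. rewrite IP, ArcA by auto. split; [tauto|]. intro H; split; auto.
    specialize (KA t Ht). assert (eps * Rabs (gy t - py) <= eps * h) by (apply Rmult_le_compat_l; lra). lra. }
  assert (InB : forall t, be - d <= t <= be + d ->
     (in_par (py - h) (py + h) (px - w) (px + w) c (curve_pt gx gy t) <-> t0 <= t <= t1)).
  { intros t Ht. rewrite IP, ArcB by auto. split; [tauto|]. intro H; split; auto.
    specialize (KB t Ht). assert (L * Rabs (F t - px) <= L * w) by (apply Rmult_le_compat_l; lra). lra. }
  assert (MI : forall t, in_par (py - h) (py + h) (px - w) (px + w) c (curve_pt gx gy t) <->
       exists k : Z, (s0 <= t + IZR k <= s1) \/ (t0 <= t + IZR k <= t1)).
  { intro t. split.
    - intro Hin. set (n := Int_part (t - al)). destruct (base_Int_part (t - al)) as [B1 B2].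
      fold n in B1, B2. set (t' := t + IZR (- n)).
      assert (Ht' : al <= t' < al + 1) by (unfold t'; rewrite opp_IZR; lra).
      assert (Ct : curve_pt gx gy t' = curve_pt gx gy t) by apply Per.
      rewrite <- Ct in Hin.
      destruct (Rle_dec t' (al + d)).
      + exists (- n)%Z. left. exact (proj1 (InA t' ltac:(lra)) Hin).
      + destruct (Rle_dec t' (be - d)).
        * exfalso. apply IP in Hin. assert (X := Sep t' ltac:(lra)). lra.
        * destruct (Rle_dec t' (be + d)).
          -- exists (- n)%Z. right. exact (proj1 (InB t' ltac:(lra)) Hin).
          -- destruct (Rle_dec t' (al + 1 - d)).
             ++ exfalso. apply IP in Hin. assert (X := Sep t' ltac:(lra)). lra.
             ++ exists (- n - 1)%Z. left.
                assert (E : t + IZR (- n - 1) = t' + IZR (-1)) by (unfold t'; rewrite !minus_IZR, !opp_IZR; ring).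
                rewrite E. apply InA. { simpl. lra. } rewrite Per. auto.
    - intros [k Hk]. rewrite <- (Per k t). destruct Hk as [Hk|Hk].
      + apply InA; auto. lra.
      + apply InB; auto. lra. }
  change (gy al) with py in Hs0e, Hs1e. rewrite Fb1 in Ht0e, Ht1e.
  assert (InjA : forall x y, al - d <= x <= al + d -> al - d <= y <= al + d -> gy x = gy y -> x = y).
  { intros x y Hx Hy E. destruct (Rtotal_order x y) as [Hl|[Hl|Hl]]; auto.
    - assert (X := IncA x y Hx Hy ltac:(lra)). rewrite E in X.
      assert (0 < A / 2 * (y - x)) by (apply Rmult_lt_0_compat; lra). lra.
    - assert (X := IncA y x Hy Hx ltac:(lra)). rewrite E in X.
      assert (0 < A / 2 * (x - y)) by (apply Rmult_lt_0_compat; lra). lra. }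
  assert (InjB : forall x y, be - d <= x <= be + d -> be - d <= y <= be + d -> F x = F y -> x = y).
  { intros x y Hx Hy E. destruct (Rtotal_order x y) as [Hl|[Hl|Hl]]; auto.
    - assert (X := IncB x y Hx Hy ltac:(lra)). rewrite E in X.
      assert (0 < B / 2 * (y - x)) by (apply Rmult_lt_0_compat; lra). lra.
    - assert (X := IncB y x Hy Hx ltac:(lra)). rewrite E in X.
      assert (0 < B / 2 * (x - y)) by (apply Rmult_lt_0_compat; lra). lra. }
  assert (KA' : forall t, s0 <= t <= s1 -> Rabs (F t - px) < w).
  { intros t Ht. assert (Rabs (gy t - py) <= h) by (apply ArcA; lra).
    assert (X := KA t ltac:(lra)).
    assert (eps * Rabs (gy t - py) <= eps * h) by (apply Rmult_le_compat_l; lra). lra. }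
  assert (KB' : forall t, t0 <= t <= t1 -> Rabs (gy t - py) < h).
  { intros t Ht. assert (Rabs (F t - px) <= w) by (apply ArcB; lra).
    assert (X := KB t ltac:(lra)).
    assert (L * Rabs (F t - px) <= L * w) by (apply Rmult_le_compat_l; lra). lra. }
  assert (Cinj : forall u v, curve_pt gx gy u = curve_pt gx gy v -> gy u = gy v /\ F u = F v).
  { intros u v E. unfold curve_pt in E. injection E. intros E1 E2. unfold F. rewrite E1, E2. auto. }
  assert (Cross : forall u v, al - d <= u <= al + d -> be - d <= v <= be + d ->
      curve_pt gx gy u = curve_pt gx gy v -> curve_pt gx gy u = p).
  { intros u v Hu Hv E. destruct (Cinj u v E) as [E1 E2].
    assert (X1 := KA u Hu). assert (X2 := KB v Hv). rewrite <- E1, <- E2 in X2.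
    set (aX := Rabs (F u - px)) in *. set (aY := Rabs (gy u - py)) in *.
    assert (aX >= 0) by (apply Rle_ge, Rabs_pos). assert (aY >= 0) by (apply Rle_ge, Rabs_pos).
    assert (eps * aY <= eps * (L * aX)) by (apply Rmult_le_compat_l; lra).
    assert (epsL2 : eps * L < / 2) by (unfold eps; apply (Rmult_lt_reg_r (2 * (L + 1))); [lra|];
       field_simplify; lra).
    assert (eps * (L * aX) <= / 2 * aX) by (rewrite <- Rmult_assoc; apply Rmult_le_compat_r; lra).
    assert (aX = 0) by lra.
    assert (aY = 0) by (assert (L * aX = 0) by (rewrite H3; ring); lra).
    apply Dz.
    - destruct (Req_dec (F u) px) as [|Hn]; auto. exfalso. assert (0 < aX) by (apply Rabs_pos_lt; lra). lra.
    - destruct (Req_dec (gy u) py) as [|Hn]; auto. exfalso. assert (0 < aY) by (apply Rabs_pos_lt; lra). lra. }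
  exists (py - h), (py + h), (px - w), (px + w), c.
  unfold intersection_parallelogram.
  split; [lra|]. split; [lra|]. split; [auto|]. split.
  { rewrite <- Pa. apply (proj2 (InA al ltac:(lra))). lra. }
  split.
  { intros q [u [v [Hu [Huv [Hv [Cu Cv]]]]]] Hq.
    assert (Hq' : in_par (py - h) (py + h) (px - w) (px + w) c (curve_pt gx gy v)) by (rewrite Cv; auto).
    rewrite <- Cu in Hq.
    apply MI in Hq as [k1 Hk1]. apply MI in Hq' as [k2 Hk2].
    assert (Cuv : curve_pt gx gy (u + IZR k1) = curve_pt gx gy (v + IZR k2)) by (rewrite !Per; congruence).
    assert (Hint : u + IZR k1 = v + IZR k2 -> False).
    { intro E. apply (IZR_not01 (k1 - k2)). rewrite minus_IZR. lra. }
    destruct Hk1 as [Hk1|Hk1]; destruct Hk2 as [Hk2|Hk2].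
    - exfalso. apply Hint, InjA; try lra. apply (Cinj _ _ Cuv).
    - rewrite <- Cu, <- (Per k1). apply (Cross _ (v + IZR k2)); auto; lra.
    - rewrite <- Cv, <- (Per k2). apply (Cross _ (u + IZR k1)); auto; lra.
    - exfalso. apply Hint, InjB; try lra. apply (Cinj _ _ Cuv). }
  exists s0, s1, t0, t1.
  split; [lra|]. split; [lra|]. split; [lra|]. split; [lra|].
  split; [exact MI|].
  split.
  { intros u Hu. apply in_par_int_abs. simpl. split; [apply ArcA'; auto|].
    change (gx u - c * gy u) with (F u). apply KA'; lra. }
  split.
  { intros u Hu. apply in_par_int_abs. simpl. split; [|apply ArcB'; auto].
    apply KB'; lra. }
  assert (Bot : exists sb, s0 <= sb <= s1 /\ gy sb = py - h).
  { destruct Hsg; subst sg; [exists s0 | exists s1]; split; lra. }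
  assert (Top : exists sb, s0 <= sb <= s1 /\ gy sb = py + h).
  { destruct Hsg; subst sg; [exists s1 | exists s0]; split; lra. }
  assert (Lef : exists sb, t0 <= sb <= t1 /\ F sb = px - w).
  { destruct Htau; subst tau; [exists t0 | exists t1]; split; lra. }
  assert (Rig : exists sb, t0 <= sb <= t1 /\ F sb = px + w).
  { destruct Htau; subst tau; [exists t1 | exists t0]; split; lra. }
  split.
  { destruct Bot as [sb [Hsb Esb]]. exists sb. split.
    - split; auto. unfold on_bottom; simpl. split; auto. assert (ZZ := Rabs_lt_inv _ _ (KA' sb Hsb)). 
      change (gx sb - c * gy sb) with (F sb). lra.
    - intros s' [Hs' [E _]]. simpl in E. apply InjA; try lra; congruence. }
  split.
  { destruct Top as [sb [Hsb Esb]]. exists sb. split.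
    - split; auto. unfold on_top; simpl. split; auto. assert (ZZ := Rabs_lt_inv _ _ (KA' sb Hsb)). 
      change (gx sb - c * gy sb) with (F sb). lra.
    - intros s' [Hs' [E _]]. simpl in E. apply InjA; try lra; congruence. }
  split.
  { destruct Lef as [sb [Hsb Esb]]. exists sb. split.
    - split; auto. unfold on_left; simpl. split; auto. assert (ZZ := Rabs_lt_inv _ _ (KB' sb Hsb)). lra.
    - intros s' [Hs' [_ E]]. simpl in E. change (gx s' - c * gy s') with (F s') in E; apply InjB; try lra; congruence. }
  split.
  { destruct Rig as [sb [Hsb Esb]]. exists sb. split.
    - split; auto. unfold on_right; simpl. split; auto. assert (ZZ := Rabs_lt_inv _ _ (KB' sb Hsb)). lra.
    - intros s' [Hs' [_ E]]. simpl in E. change (gx s' - c * gy s') with (F s') in E; apply InjB; try lra; congruence. }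
  intros t [H1 H2]. simpl in H1, H2. change (gx t - c * gy t) with (F t) in H2.
  assert (Hin : in_par (py - h) (py + h) (px - w) (px + w) c (curve_pt gx gy t)).
  { unfold in_par; simpl. change (gx t - c * gy t) with (F t). split; destruct H1; destruct H2; lra. }
  apply MI in Hin as [k [Hk|Hk]]; destruct (Cinj _ _ (Per k t)) as [E1 E2]; rewrite <- E1 in H1; rewrite <- E2 in H2.
  - assert (ZZ := Rabs_lt_inv _ _ (KA' _ Hk)). destruct H2; lra.
  - assert (ZZ := Rabs_lt_inv _ _ (KB' _ Hk)). destruct H1; lra.
Qed.

Theorem mainTheorem2 (gx gy : R -> R) (hD : generic_knot_diagram gx gy)
  (p : R * R) (hp : is_double_point gx gy p) :
  exists y0 y1 a0 a1 c : R, intersection_parallelogram gx gy p y0 y1 a0 a1 c.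
Proof.
  destruct hD as [Hper [Sx [Sy [Hreg [Htrip [Htrans Hfin]]]]]].
  assert (Pgx : forall t, gx (t + 1) = gx t) by (intro; apply Hper).
  assert (Pgy : forall t, gy (t + 1) = gy t) by (intro; apply Hper).
  assert (Dx : forall t, ex_derive gx t) by (intro t; exact (Sx 1%nat t)).
  assert (Dy : forall t, ex_derive gy t) by (intro t; exact (Sy 1%nat t)).
  assert (Cx : forall t, continuity_pt (Derive gx) t) by (intro t; apply deriv_cont; exact (Sx 2%nat t)).
  assert (Cy : forall t, continuity_pt (Derive gy) t) by (intro t; apply deriv_cont; exact (Sy 2%nat t)).
  assert (Cm1 : forall t, curve_pt gx gy (t - 1) = curve_pt gx gy t).
  { intro t. unfold curve_pt. rewrite <- (Pgx (t - 1)), <- (Pgy (t - 1)). replace (t - 1 + 1) with t by ring. auto. }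
  destruct hp as [a [b [Ha [Hab [Hb [Ca Cb]]]]]].
  assert (Hcr := Htrans a b Ha Hab Hb (eq_trans Ca (eq_sym Cb))).
  destruct (Req_dec (Derive gy a) 0) as [Hy0|Hy0].
  - assert (Hyb : Derive gy b <> 0) by (intro E; apply Hcr; rewrite Hy0, E; ring).
    apply (core gx gy p b (a + 1)); auto; try lra.
    + rewrite <- Ca, <- Cm1. f_equal. ring.
    + intros t Ht Ct.
      destruct (Rlt_dec t 1).
      * destruct (Req_dec t b); [auto|]. exfalso. apply (Htrip a b t); try lra. split; congruence.
      * assert (C' : curve_pt gx gy (t - 1) = p) by (rewrite Cm1; auto).
        destruct (Rtotal_order (t - 1) a) as [Hl|[Hl|Hl]].
        -- exfalso. apply (Htrip (t - 1) a b); try lra. split; congruence.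
        -- right. lra.
        -- exfalso. apply (Htrip a (t - 1) b); try lra. split; congruence.
    + rewrite (deriv_per gx a Pgx (Dx _)), (deriv_per gy a Pgy (Dy _)).
      intro E. apply Hcr. lra.
    + exists a, b. auto.
  - apply (core gx gy p a b); auto; try lra.
    + intros t Ht Ct.
      destruct (Rlt_dec t 1).
      * destruct (Rtotal_order t b) as [Hl|[Hl|Hl]].
        -- destruct (Req_dec t a); [auto|]. exfalso. apply (Htrip a t b); try lra. split; congruence.
        -- auto.
        -- exfalso. apply (Htrip a b t); try lra. split; congruence.
      * assert (C' : curve_pt gx gy (t - 1) = p) by (rewrite Cm1; auto).
        exfalso. apply (Htrip (t - 1) a b); try lra. split; congruence.
    + exists a, b. auto.
Qed.
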